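(* Let $A,Q\in\mathbb{R}^{n\times n}$, $B,L\in\mathbb{R}^{n\times m}$, $R\in\mathbb{R}^{m\times m}$, and $A_0^i\in\mathbb{R}^{n\times n}$, $B_0^i\in\mathbb{R}^{n\times m}$ for $i=1,\dots,r$, such that $R\succ 0$ and $\begin{bmatrix} Q & L\\ L^{\mathsf T} & R\end{bmatrix}\succeq 0$ (symmetric positive semidefinite). Suppose that $$\mathcal N(Q-LR^{-1}L^{\mathsf T})\subseteq \mathcal N(L^{\mathsf T})\cap\bigcap_{i=1}^r\mathcal N(A_0^i).$$ If $(Q-LR^{-1}L^{\mathsf T},A)$ is detectable, then for every symmetric positive semidefinite $\widetilde X\in\mathbb{R}^{n\times n}$ the pair $\big(H_{\mathrm c}(\widetilde X),A_{\mathrm c}(\widetilde X)\big)$ is detectable and $H_{\mathrm c}(\widetilde X)\succeq 0$.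
   Context: $\mathcal N(\cdot)$ denotes the null space. For symmetric $X\in\mathbb{R}^{n\times n}$ define $\Pi_{11}(X)=\sum_{i=1}^r (A_0^i)^{\mathsf T}XA_0^i$, $\Pi_{12}(X)=\sum_{i=1}^r (A_0^i)^{\mathsf T}XB_0^i$, $\Pi_{22}(X)=\sum_{i=1}^r (B_0^i)^{\mathsf T}XB_0^i$, $L_{\mathrm c}(X)=L+\Pi_{12}(X)$, $R_{\mathrm c}(X)=R+\Pi_{22}(X)$, $Q_{\mathrm c}(X)=Q+\Pi_{11}(X)$, $A_{\mathrm c}(X)=A-B[R_{\mathrm c}(X)]^{-1}[L_{\mathrm c}(X)]^{\mathsf T}$, $H_{\mathrm c}(X)=Q_{\mathrm c}(X)-L_{\mathrm c}(X)[R_{\mathrm c}(X)]^{-1}[L_{\mathrm c}(X)]^{\mathsf T}$. A pair $(H,A)$ of $n\times n$ matrices is detectable if there is no nonzero $z\in\mathbb{C}^n$ and $\lambda\in\mathbb{C}$ with $\mathrm{Re}(\lambda)\ge0$ such that $(A-\lambda I)z=0$ and $Hz=0$. *)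

(* Defs.v *)
From HB Require Import structures.
From mathcomp Require Import all_boot all_order all_algebra.
From mathcomp Require Import reals.
From mathcomp Require Import complex.
Set Implicit Arguments. Unset Strict Implicit. Unset Printing Implicit Defensive.
Import Order.TTheory GRing.Theory Num.Theory.
Local Open Scope ring_scope.

Section Defs.
Variable R : realType.

Definition symmx n (X : 'M[R]_n) : Prop := X^T = X.

Definition psdmx n (X : 'M[R]_n) : Prop :=
  symmx X /\ forall x : 'cV[R]_n, 0 <= (x^T *m X *m x) 0 0.

Definition pdmx n (X : 'M[R]_n) : Prop :=
  symmx X /\ forall x : 'cV[R]_n, x != 0 -> 0 < (x^T *m X *m x) 0 0.

Definition nullsp p q (M : 'M[R]_(p, q)) : 'cV[R]_q -> Prop :=
  fun x => M *m x = 0.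

Definition cplx_mx p q (M : 'M[R]_(p, q)) : 'M[R[i]]_(p, q) :=
  map_mx (fun a => a%:C%C) M.

Definition detectable n (H A : 'M[R]_n) : Prop :=
  ~ exists (z : 'cV[R[i]]_n) (lam : R[i]),
      [/\ z != 0, 0 <= complex.Re lam,
          (cplx_mx A - lam%:M) *m z = 0 & cplx_mx H *m z = 0].

Variables (n m r : nat).
Variables (A Q : 'M[R]_n) (B L : 'M[R]_(n, m)) (Rm : 'M[R]_m)
          (A0 : 'I_r -> 'M[R]_n) (B0 : 'I_r -> 'M[R]_(n, m)).

Definition Pi11 (X : 'M[R]_n) : 'M[R]_n := \sum_(i < r) (A0 i)^T *m X *m A0 i.
Definition Pi12 (X : 'M[R]_n) : 'M[R]_(n, m) := \sum_(i < r) (A0 i)^T *m X *m B0 i.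
Definition Pi22 (X : 'M[R]_n) : 'M[R]_m := \sum_(i < r) (B0 i)^T *m X *m B0 i.
Definition Lc X := L + Pi12 X.
Definition Rc X := Rm + Pi22 X.
Definition Qc X := Q + Pi11 X.
Definition Ac X := A - B *m invmx (Rc X) *m (Lc X)^T.
Definition Hc X := Qc X - Lc X *m invmx (Rc X) *m (Lc X)^T.

End Defs.

(* Main.v *)
Require Import Defs.
From HB Require Import structures.
From mathcomp Require Import all_boot all_order all_algebra.
From mathcomp Require Import reals.
From mathcomp Require Import complex.
From mathcomp Require Import ring lra.
Import Order.TTheory GRing.Theory Num.Theory.
Local Open Scope ring_scope.
Section H.
Variable R : realType.

Lemma e00D (a b : 'M[R]_1) : (a + b) 0 0 = a 0 0 + b 0 0.
Proof. by rewrite mxE. Qed.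
Lemma e00N (a : 'M[R]_1) : (- a) 0 0 = - a 0 0.
Proof. by rewrite mxE. Qed.
Lemma e00B (a b : 'M[R]_1) : (a - b) 0 0 = a 0 0 - b 0 0.
Proof. by rewrite !mxE. Qed.
Lemma e00Z (t : R) (a : 'M[R]_1) : (t *: a) 0 0 = t * a 0 0.
Proof. by rewrite !mxE. Qed.
Lemma e00T p q (a : 'M[R]_(p,q)) i j : a^T i j = a j i.
Proof. by rewrite !mxE. Qed.

Lemma pd_unit k (S : 'M[R]_k) : pdmx S -> S \in unitmx.
Proof.
move=> [_ hS]; rewrite unitmxE unitfE; apply/negP => /det0P [v v0 vS].
have := hS v^T; rewrite trmx_eq0 trmxK vS mul0mx mxE ltxx => /(_ v0).
by [].
Qed.

Lemma psd0 k (P : 'M[R]_k) (x : 'cV[R]_k) : psdmx P -> (x^T *m P *m x) 0 0 = 0 -> P *m x = 0.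
Proof.
move=> [sP hP] hx.
set y := P *m x.
set s := (y^T *m y) 0 0.
set c := (y^T *m P *m y) 0 0.
have c0 : 0 <= c by apply: hP.
have ht : forall t, 0 <= 2 * t * s + t ^+ 2 * c.
  move=> t; have := hP (x + t *: y).
  have -> : (x + t *: y)^T = x^T + t *: y^T by rewrite raddfD /= linearZ.
  rewrite !mulmxDl !mulmxDr -!scalemxAl -!scalemxAr.
  rewrite !e00D !e00Z hx.
  have -> : (x^T *m P *m y) = (y^T *m P *m x)^T.
    by rewrite !trmx_mul !trmxK (sP : P^T = P) !mulmxA.
  rewrite e00T.
  have -> : (y^T *m P *m x) = y^T *m y by rewrite -mulmxA.
  rewrite -/s -/c => h. rewrite expr2; lra.
have s0 : s = 0.
  have sge : 0 <= s.
    by rewrite /s mxE; apply: sumr_ge0 => i _; rewrite mxE sqr_ge0 // -expr2.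
  have := ht (- s / (c + 1)).
  have c1 : 0 < c + 1 by lra.
  move=> h; apply/eqP; rewrite eq_le sge andbT.
  have : 0 <= (- 2 * s * s * (c + 1) + s * s * c) / ((c + 1) ^+ 2).
    suff -> : (- 2 * s * s * (c + 1) + s * s * c) / ((c + 1) ^+ 2) =
       2 * (- s / (c + 1)) * s + (- s / (c + 1)) ^+ 2 * c by [].
    field; lra.
  rewrite pmulr_lge0 ?invr_gt0 ?exprn_gt0 //; nra.
apply/matrixP => i j; rewrite (ord1 j) [RHS]mxE.
move: s0; rewrite /s mxE => /eqP; rewrite psumr_eq0; last first.
  by move=> l _; rewrite mxE -expr2 sqr_ge0.
move=> /allP /(_ i (mem_index_enum _)); rewrite mxE -expr2 sqrf_eq0 => /eqP.
by [].
Qed.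
Lemma cs k p (S : 'M[R]_k) (K : 'M[R]_(p,k)) (x : 'cV[R]_p) (u : 'cV[R]_k) :
 S^T = S -> S \in unitmx ->
 (x^T *m K *m u) 0 0 + (u^T *m K^T *m x) 0 0 + (u^T *m S *m u) 0 0 =
 ((u + invmx S *m K^T *m x)^T *m S *m (u + invmx S *m K^T *m x)) 0 0
   - (x^T *m (K *m invmx S *m K^T) *m x) 0 0.
Proof.
move=> sS uS.
have -> : (u + invmx S *m K^T *m x)^T = u^T + x^T *m K *m invmx S.
  by rewrite raddfD /= !trmx_mul trmxK trmx_inv sS mulmxA.
rewrite !mulmxDl !mulmxDr !mulmxA !mulmxK // !mulmxKV //.
rewrite !e00D; ring.
Qed.

Lemma qf_block p k (x : 'cV[R]_p) (u : 'cV[R]_k) a b c d :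
  ((col_mx x u)^T *m block_mx a b c d *m col_mx x u) 0 0 =
  (x^T *m a *m x) 0 0 + (x^T *m b *m u) 0 0 + (u^T *m c *m x) 0 0
  + (u^T *m d *m u) 0 0.
Proof.
rewrite tr_col_mx mul_row_block mul_row_col !mulmxDl !e00D; ring.
Qed.
Lemma ReD (a b : R[i]) : complex.Re (a + b) = complex.Re a + complex.Re b. Proof. by case: a => ? ?; case: b => ? ?. Qed.
Lemma ImD (a b : R[i]) : complex.Im (a + b) = complex.Im a + complex.Im b. Proof. exact: (raddfD (@complex.Im R : Rcomplex R -> R)). Qed.
Lemma ReMr (a : R) (w : R[i]) : complex.Re (a%:C * w)%C = a * complex.Re w.
Proof. by case: w => ? ? /=; rewrite mul0r subr0. Qed.
Lemma ImMr (a : R) (w : R[i]) : complex.Im (a%:C * w)%C = a * complex.Im w.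
Proof. by case: w => ? ? /=; rewrite mul0r addr0. Qed.

Lemma ReE p q (M : 'M[R]_(p,q)) (z : 'cV[R[i]]_q) i j :
  complex.Re ((cplx_mx M *m z) i j) = (M *m map_mx (@complex.Re R) z) i j.
Proof.
rewrite !mxE (big_morph _ ReD (erefl (complex.Re (0 : R[i])))).
by apply: eq_bigr => l _; rewrite !mxE ReMr.
Qed.
Lemma ImE p q (M : 'M[R]_(p,q)) (z : 'cV[R[i]]_q) i j :
  complex.Im ((cplx_mx M *m z) i j) = (M *m map_mx (@complex.Im R) z) i j.
Proof.
rewrite !mxE (big_morph _ ImD (erefl (complex.Im (0 : R[i])))).
by apply: eq_bigr => l _; rewrite !mxE ImMr.
Qed.

Lemma cplx0 p q (M : 'M[R]_(p,q)) (z : 'cV[R[i]]_q) :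
  cplx_mx M *m z = 0 <->
  M *m map_mx (@complex.Re R) z = 0 /\ M *m map_mx (@complex.Im R) z = 0.
Proof.
split.
  move=> h; split; apply/matrixP => i j; by rewrite -?ReE -?ImE h !mxE.
move=> [h1 h2]; apply/matrixP => i j.
by rewrite [LHS]complexE ReE ImE h1 h2 !mxE mulr0 addr0.
Qed.

Lemma cplxM p q s (M : 'M[R]_(p,q)) (N : 'M[R]_(q,s)) :
  cplx_mx (M *m N) = cplx_mx M *m cplx_mx N.
Proof. exact: map_mxM. Qed.
Lemma cplxB p q (M N : 'M[R]_(p,q)) :
  cplx_mx (M - N) = cplx_mx M - cplx_mx N.
Proof. exact: map_mxB. Qed.
Definition quad p k (Q' : 'M[R]_p) (K : 'M[R]_(p,k)) (S : 'M[R]_k) (x : 'cV[R]_p) (u : 'cV[R]_k) :=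
  (x^T *m Q' *m x) 0 0 + (x^T *m K *m u) 0 0 + (u^T *m K^T *m x) 0 0
  + (u^T *m S *m u) 0 0.
Arguments quad {p k}.

Lemma cs2 p k (Q' : 'M[R]_p) (K : 'M[R]_(p,k)) (S : 'M[R]_k) (x : 'cV[R]_p) (u : 'cV[R]_k) :
  S^T = S -> S \in unitmx ->
  quad Q' K S x u = (x^T *m (Q' - K *m invmx S *m K^T) *m x) 0 0
     + ((u + invmx S *m K^T *m x)^T *m S *m (u + invmx S *m K^T *m x)) 0 0.
Proof.
move=> sS uS; have h := @cs _ _ S K x u sS uS.
rewrite /quad mulmxBr mulmxBl e00B; lra.
Qed.

Lemma cs3 p k (Q' : 'M[R]_p) (K : 'M[R]_(p,k)) (S : 'M[R]_k) (x : 'cV[R]_p) :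
  S^T = S -> S \in unitmx ->
  quad Q' K S x (- (invmx S *m K^T *m x)) =
    (x^T *m (Q' - K *m invmx S *m K^T) *m x) 0 0.
Proof.
move=> sS uS; rewrite cs2 // addNr trmx0 !mul0mx [X in _ + X]mxE addr0. done.
Qed.

Lemma quad_ge p k (Q' : 'M[R]_p) (K : 'M[R]_(p,k)) (S : 'M[R]_k) (x : 'cV[R]_p) (u : 'cV[R]_k) :
  pdmx S ->
  (x^T *m (Q' - K *m invmx S *m K^T) *m x) 0 0 <= quad Q' K S x u.
Proof.
move=> pS; have uS := pd_unit _ _ pS; rewrite cs2 //; last by case: pS.
rewrite lerDl; set v := (u + _).
case: (eqVneq v 0) => [->|v0]; first by rewrite trmx0 !mul0mx mxE.
by apply/ltW; apply: pS.2.
Qed.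
Lemma trD p q (a b : 'M[R]_(p,q)) : (a + b)^T = a^T + b^T.
Proof. by apply/matrixP => i j; rewrite !mxE. Qed.

Lemma trB p q (a b : 'M[R]_(p,q)) : (a - b)^T = a^T - b^T.
Proof. by apply/matrixP => i j; rewrite !mxE. Qed.

Lemma trS p q r (F : 'I_r -> 'M[R]_(p,q)) : (\sum_i F i)^T = \sum_i (F i)^T.
Proof.
by apply/matrixP => i j; rewrite !mxE !summxE; apply: eq_bigr => l _; rewrite mxE.
Qed.

Lemma quad_c n m r (Q : 'M[R]_n) (L : 'M[R]_(n,m)) (Rm : 'M[R]_m)
  (A0 : 'I_r -> 'M[R]_n) (B0 : 'I_r -> 'M[R]_(n,m)) (X : 'M[R]_n)
  (x : 'cV[R]_n) (u : 'cV[R]_m) : X^T = X ->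
  quad (Qc Q A0 X) (Lc L A0 B0 X) (Rc Rm B0 X) x u = quad Q L Rm x u +
   \sum_i ((A0 i *m x + B0 i *m u)^T *m X *m (A0 i *m x + B0 i *m u)) 0 0.
Proof.
move=> sX.
rewrite /quad /Qc /Lc /Rc /Pi11 /Pi12 /Pi22.
have -> : (L + \sum_i (A0 i)^T *m X *m B0 i)^T =
   L^T + \sum_i (B0 i)^T *m X *m A0 i.
  rewrite raddfD /= trS; congr (_ + _); apply: eq_bigr => i _.
  by rewrite !trmx_mul trmxK sX mulmxA.
rewrite !mulmxDr !mulmxDl !mulmx_sumr !mulmx_suml !e00D !summxE.
have -> : \sum_i ((A0 i *m x + B0 i *m u)^T *m X *m (A0 i *m x + B0 i *m u)) 0 0
  = \sum_i ((x^T *m ((A0 i)^T *m X *m A0 i) *m x) 0 0 + (x^T *m ((A0 i)^T *m X *m B0 i) *m u) 0 0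
     + (u^T *m ((B0 i)^T *m X *m A0 i) *m x) 0 0 + (u^T *m ((B0 i)^T *m X *m B0 i) *m u) 0 0).
  apply: eq_bigr => i _.
  rewrite trD !trmx_mul !mulmxDl !mulmxDr !e00D !mulmxA; ring.
rewrite !big_split /=; ring.
Qed.
End H.
Arguments quad {R p k}.

Theorem lemma2p2 (R : realType) (n m r : nat)
  (A Q : 'M[R]_n) (B L : 'M[R]_(n, m)) (Rm : 'M[R]_m)
  (A0 : 'I_r -> 'M[R]_n) (B0 : 'I_r -> 'M[R]_(n, m)) :
  pdmx Rm ->
  psdmx (block_mx Q L L^T Rm) ->
  (forall x : 'cV[R]_n, nullsp (Q - L *m invmx Rm *m L^T) x ->
     nullsp L^T x /\ forall i : 'I_r, nullsp (A0 i) x) ->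
  detectable (Q - L *m invmx Rm *m L^T) A ->
  forall Xt : 'M[R]_n, psdmx Xt ->
    detectable (Hc Q L Rm A0 B0 Xt) (Ac A B L Rm A0 B0 Xt) /\
    psdmx (Hc Q L Rm A0 B0 Xt).
Proof.
move=> pdR psdM hnull hdet X psdX.
have [sM hM] := psdM.
move: sM; rewrite /symmx tr_block_mx trmxK => /eq_block_mx [sQ _ _ sR].
have sX : X^T = X := psdX.1.
have uRm := @pd_unit _ _ _ pdR.
set H0 := Q - L *m invmx Rm *m L^T.
have qM : forall x u, 0 <= quad Q L Rm x u.
  by move=> x u; have := hM (col_mx x u); rewrite qf_block.
have H0ge : forall x u, (x^T *m H0 *m x) 0 0 <= quad Q L Rm x u.
  by move=> x u; apply: quad_ge.
have H0psd : forall x : 'cV[R]_n, 0 <= (x^T *m H0 *m x) 0 0.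
  by move=> x; rewrite /H0 -(@cs3 _ _ _ Q L Rm x sR uRm); apply: qM.
have sH0 : H0^T = H0.
  by rewrite /H0 trB !trmx_mul trmxK trmx_inv sR sQ mulmxA.
have psdH0 : psdmx H0 by split.
set Rc' := Rc Rm B0 X.
have sRc : Rc'^T = Rc'.
  rewrite /Rc' /Rc /Pi22 trD trS sR; congr (_ + _); apply: eq_bigr => i _.
  by rewrite !trmx_mul trmxK sX mulmxA.
have pdRc : pdmx Rc'.
  split => // u u0.
  rewrite /Rc' /Rc mulmxDr mulmxDl e00D /Pi22 mulmx_sumr mulmx_suml summxE.
  have h1 := pdR.2 u u0.
  have h2 : 0 <= \sum_i (u^T *m ((B0 i)^T *m X *m B0 i) *m u) 0 0.
    apply: sumr_ge0 => i _.
    have -> : u^T *m ((B0 i)^T *m X *m B0 i) *m u =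
              (B0 i *m u)^T *m X *m (B0 i *m u).
      by rewrite trmx_mul !mulmxA.
    exact: psdX.2.
  lra.
have uRc := @pd_unit _ _ _ pdRc.
set Lc' := Lc L A0 B0 X.
set Qc' := Qc Q A0 X.
have HcGe : forall x : 'cV[R]_n, (x^T *m H0 *m x) 0 0 <=
                      (x^T *m Hc Q L Rm A0 B0 X *m x) 0 0.
  move=> x; rewrite /Hc -/Rc' -/Lc' -/Qc'.
  rewrite -(@cs3 _ _ _ Qc' Lc' Rc' x sRc uRc) /Qc' /Lc' /Rc' quad_c //.
  have := H0ge x (- (invmx Rc' *m Lc'^T *m x)).
  have : 0 <= \sum_i ((A0 i *m x + B0 i *m (- (invmx Rc' *m Lc'^T *m x)))^T *m X
     *m (A0 i *m x + B0 i *m (- (invmx Rc' *m Lc'^T *m x)))) 0 0.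
    by apply: sumr_ge0 => i _; apply: psdX.2.
  lra.
have sHc : (Hc Q L Rm A0 B0 X)^T = Hc Q L Rm A0 B0 X.
  rewrite /Hc -/Rc' -/Lc' -/Qc' trB !trmx_mul trmxK trmx_inv sRc mulmxA.
  congr (_ - _).
  rewrite /Qc' /Qc /Pi11 trD trS sQ; congr (_ + _); apply: eq_bigr => i _.
  by rewrite !trmx_mul trmxK sX mulmxA.
have psdHc : psdmx (Hc Q L Rm A0 B0 X).
  split => // x; have := HcGe x; have := H0psd x; lra.
split => //.
move=> [z [lam [z0 hlam hA hH]]].
have key : forall y : 'cV[R]_n, Hc Q L Rm A0 B0 X *m y = 0 ->
    H0 *m y = 0 /\ Lc'^T *m y = 0.
  move=> y hy.
  have e : (y^T *m H0 *m y) 0 0 = 0.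
    apply/eqP; rewrite eq_le H0psd andbT.
    have := HcGe y; rewrite -[y^T *m Hc Q L Rm A0 B0 X *m y]mulmxA hy mulmx0. by rewrite [Z in _ <= Z -> _]mxE.
  have h0 := @psd0 _ _ _ _ psdH0 e.
  split => //.
  have [hL hA0] := hnull y h0.
  rewrite /Lc' /Lc trD mulmxDl hL add0r /Pi12 trS mulmx_suml big1 // => i _.
  by rewrite !trmx_mul trmxK -!mulmxA hA0 !mulmx0.
move/cplx0: hH => [/key [h1 h2] /key [h3 h4]].
apply: hdet; exists z, lam; split => //; last by apply/cplx0.
have hLz : cplx_mx Lc'^T *m z = 0 by apply/cplx0.
have hb : cplx_mx (B *m invmx Rc' *m Lc'^T) *m z = 0.
  by rewrite cplxM -mulmxA hLz mulmx0.
by move: hA; rewrite /Ac -/Rc' -/Lc' cplxB !mulmxBl hb subr0.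
Qed.
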